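(* Let $W(y|x_1,x_2)$ be a discrete memoryless multiple access channel with finite input alphabets $\mathcal{X}_1,\mathcal{X}_2$ and finite output alphabet $\mathcal{Y}$, and let $\delta,\eta>0$. Let $(x_1^n,x_2^n)$ and $(\tilde{x}_1^n,\tilde{x}_2^n)$ be pairs of words with Hamming distances $d_H(x_1^n,\tilde{x}_1^n)\ge\delta n$ and $d_H(x_2^n,\tilde{x}_2^n)\ge\delta n$, and suppose that for all $x_1\in\mathcal{X}_1,x_2\in\mathcal{X}_2$ and every probability distribution $\mathcal{P}$ on $\mathcal{X}_1\times\mathcal{X}_2$ with $\mathcal{P}(x_1,x_2)=0$, \[ \Big\|W_{x_1,x_2}-\sum_{\tilde{x}_1,\tilde{x}_2}\mathcal{P}(\tilde{x}_1,\tilde{x}_2)W_{\tilde{x}_1,\tilde{x}_2}\Big\|\ge\eta . \] Then, with $\epsilon=\frac{\delta^4\eta^2}{2|\mathcal{X}_1|^2|\mathcal{X}_2|^2|\mathcal{Y}|}$, \[ W^n_{\tilde{x}_1^n,\tilde{x}_2^n}\big(\mathcal{T}^n_{W,\epsilon}(x_1^n,x_2^n)\big)\le 2\exp\Big(-\frac{n\epsilon^4}{2}\Big). \]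
   Context: $W_{x_1,x_2}$ denotes the output distribution $W(\cdot|x_1,x_2)$ on $\mathcal{Y}$; $\|\cdot\|$ is the statistical distance $\|P-Q\|=\frac12\sum_y|P(y)-Q(y)|$. For words $x_1^n,x_2^n$, $W^n_{x_1^n,x_2^n}=W_{x_{1,1}x_{2,1}}\otimes\cdots\otimes W_{x_{1,n}x_{2,n}}$ is the product output distribution on $\mathcal{Y}^n$. $\mathcal{T}^n_{W,\epsilon}(x_1^n,x_2^n)\subseteq\mathcal{Y}^n$ is the set of output sequences that are conditionally $\epsilon$-typical given $(x_1^n,x_2^n)$ with respect to $W$ (jointly typical with $(x_1^n,x_2^n)$), i.e. the sequences $y^n$ whose joint empirical counts with $(x_1^n,x_2^n)$ deviate from those expected under $W$ by at most $\epsilon n$. *)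

(* Defs.v *)
From mathcomp Require Import all_boot all_order all_algebra.
From mathcomp Require Import reals.
From mathcomp Require Import sequences exp.
Set Implicit Arguments. Unset Strict Implicit. Unset Printing Implicit Defensive.
Import Order.TTheory GRing.Theory Num.Theory.
Local Open Scope ring_scope.

Section Defs.
Variables (R : realType) (X1 X2 Y : finType).

Definition is_channel (W : X1 -> X2 -> Y -> R) : Prop :=
  forall a b, (forall y, 0 <= W a b y) /\ \sum_(y : Y) W a b y = 1.

Definition is_distr2 (P : X1 * X2 -> R) : Prop :=
  (forall u, 0 <= P u) /\ \sum_(u : X1 * X2) P u = 1.

Definition stat_dist (P Q : Y -> R) : R :=
  2^-1 * \sum_(y : Y) `|P y - Q y|.

Definition mixture (W : X1 -> X2 -> Y -> R) (P : X1 * X2 -> R) : Y -> R :=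
  fun y => \sum_(u : X1 * X2) P u * W u.1 u.2 y.

Variable n : nat.

Definition hamming (T : finType) (x x' : {ffun 'I_n -> T}) : nat :=
  #|[set i : 'I_n | x i != x' i]|.

Definition count2 (x1 : {ffun 'I_n -> X1}) (x2 : {ffun 'I_n -> X2}) a b : nat :=
  #|[set i : 'I_n | (x1 i == a) && (x2 i == b)]|.

Definition count3 (x1 : {ffun 'I_n -> X1}) (x2 : {ffun 'I_n -> X2})
  (y : {ffun 'I_n -> Y}) a b c : nat :=
  #|[set i : 'I_n | [&& x1 i == a, x2 i == b & y i == c]]|.

Definition typical_set (W : X1 -> X2 -> Y -> R) (eps : R)
  (x1 : {ffun 'I_n -> X1}) (x2 : {ffun 'I_n -> X2}) : {set {ffun 'I_n -> Y}} :=
  [set y | [forall a, forall b, forall c,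
     `|(count3 x1 x2 y a b c)%:R - (count2 x1 x2 a b)%:R * W a b c| <= eps * n%:R]].

Definition prod_prob (W : X1 -> X2 -> Y -> R)
  (x1 : {ffun 'I_n -> X1}) (x2 : {ffun 'I_n -> X2}) (A : {set {ffun 'I_n -> Y}}) : R :=
  \sum_(y in A) \prod_(i < n) W (x1 i) (x2 i) (y i).

End Defs.

(* Main.v *)
Require Import Defs.
From mathcomp Require Import all_boot all_order all_algebra.
From mathcomp Require Import reals.
From mathcomp Require Import sequences exp.
From mathcomp Require Import ring lra.
Import Order.TTheory GRing.Theory Num.Theory.
Local Open Scope ring_scope.

Lemma expR_le_quad (R : realType) (u : R) : u <= 2^-1 -> expR u <= 1 + u + 2 * u ^+ 2.
Proof.
move=> hu.
have h1 : 1 - u <= expR (- u) by have := expR_ge1Dx (- u).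
have h2 : expR u * (1 - u) <= 1.
  apply: (@le_trans _ _ (expR u * expR (- u))); last by rewrite -expRD subrr expR0.
  by apply: ler_wpM2l; [exact: expR_ge0|].
have hp : 0 < 1 - u by lra.
rewrite -(ler_pM2r hp); apply: (le_trans h2).
have : 0 <= u ^+ 2 * (1 - 2 * u) by apply: mulr_ge0; [exact: sqr_ge0| lra].
rewrite expr2; nra.
Qed.

Lemma chernoff (R : realType) (Y : finType) (n : nat) (Wi : 'I_n -> Y -> R)
  (g : 'I_n -> Y -> R) (lam t : R) (T : {set {ffun 'I_n -> Y}}) :
  (forall i y, 0 <= Wi i y) -> (forall i, \sum_y Wi i y = 1) ->
  (forall i, \sum_y Wi i y * g i y = 0) -> (forall i y, `|g i y| <= 1) ->
  0 <= lam <= 2^-1 ->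
  (forall y, y \in T -> t <= \sum_i g i (y i)) ->
  \sum_(y in T) \prod_i Wi i (y i) <= expR (n%:R * (2 * lam ^+ 2) - lam * t).
Proof.
move=> W0 W1 g0 g1 /andP[l0 l1] hT.
have Q0 y : 0 <= \prod_i Wi i (y i) by apply: prodr_ge0.
apply: (@le_trans _ _ (\sum_(y in T) \prod_i Wi i (y i) *
                          expR (lam * (\sum_i g i (y i)) - lam * t))).
  apply: ler_sum => y yT; rewrite -[X in X <= _]mulr1 ler_wpM2l //.
  apply: le_trans (expR_ge1Dx _); rewrite lerDl subr_ge0 ler_wpM2l //.
  exact: hT.
apply: (@le_trans _ _ (\sum_(y : {ffun 'I_n -> Y}) \prod_i Wi i (y i) *
                          expR (lam * (\sum_i g i (y i)) - lam * t))).
  rewrite [X in _ <= X](bigID (fun y => y \in T)) /= lerDl.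
  by apply: sumr_ge0 => y _; rewrite mulr_ge0 ?expR_ge0.
under eq_bigr => y _ do rewrite expRD mulrA mulr_sumr expR_sum -big_split /=.
rewrite -mulr_suml expRD ler_wpM2r ?expR_ge0 //.
rewrite -(bigA_distr_bigA (fun i c => Wi i c * expR (lam * g i c))) /=.
rewrite expRM_natl.
have -> : expR (2 * lam ^+ 2) ^+ n = \prod_(i < n) expR (2 * lam ^+ 2) by rewrite prodr_const card_ord.
apply: ler_prod => i _; apply/andP; split.
  by apply: sumr_ge0 => c _; rewrite mulr_ge0 ?expR_ge0.
apply: (@le_trans _ _ (\sum_c Wi i c * (1 + lam * g i c + 2 * lam ^+ 2))).
  apply: ler_sum => c _; rewrite ler_wpM2l //; have := g1 i c; rewrite ler_norml => /andP[ga gb].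
  apply: (@le_trans _ _ (1 + lam * g i c + 2 * (lam * g i c) ^+ 2)); first by apply: expR_le_quad; nra.
  rewrite lerD2l ler_pM2l // exprMn ler_piMr ?sqr_ge0 //.
  have : 0 <= (1 - g i c) * (1 + g i c) by apply: mulr_ge0; lra.
  rewrite expr2; nra.
under eq_bigr => c _ do rewrite mulrDr mulrDr.
rewrite !big_split /= -!mulr_suml W1.
under eq_bigr => c _ do rewrite mulrCA.
rewrite -mulr_sumr g0 mulr0 mul1r addr0.
by rewrite mul1r expR_ge1Dx.
Qed.

Lemma card_set_sum (R : realType) (T : finType) (P : pred T) :
  (#|[set i | P i]|)%:R = \sum_i (P i)%:R :> R.
Proof.
rewrite -sum1_card natr_sum big_mkcond /=; apply: eq_bigr => i _.
by rewrite in_set; case: (P i).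
Qed.

Lemma sum_pred1 (R : realType) (T : finType) (t : T) (F : T -> R) :
  \sum_v (t == v)%:R * F v = F t.
Proof.
rewrite (bigD1 t) //= eqxx mul1r big1 ?addr0 // => v /negbTE.
by rewrite eq_sym => ->; rewrite mul0r.
Qed.

Lemma avg_ex (R : realType) (T : finType) (F : T -> R) :
  0 < \sum_x F x -> exists t, \sum_x F x <= #|T|%:R * F t.
Proof.
case: (pickP T) => [t0 _|h].
  move=> _; exists [arg max_(t > t0) F t]%O.
  case: arg_maxP => // t _ ht.
  rewrite -sum1_card natr_sum mulr_suml.
  by apply: ler_sum => x _; rewrite mul1r; apply: ht.
by rewrite big_pred0 // ltxx.
Qed.

Lemma num_eps (R : realType) (d e k1 k2 ky : R) :
  0 < d -> d <= 1 -> 0 < e -> e <= 1 -> 1 <= k1 -> 1 <= k2 -> 1 <= ky ->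
  let eps := d ^+ 4 * e ^+ 2 / (2 * k1 ^+ 2 * k2 ^+ 2 * ky) in
  0 <= eps /\ eps <= 2^-1 /\ 4 * eps * (k1 * k2 * ky) <= 2 * (d * e).
Proof.
move=> d0 d1 e0 e1 k10 k20 ky0 eps.
have den0 : 0 < 2 * k1 ^+ 2 * k2 ^+ 2 * ky.
  by rewrite !mulr_gt0 ?exprn_gt0 //; lra.
have hE : eps * (2 * k1 ^+ 2 * k2 ^+ 2 * ky) = d ^+ 4 * e ^+ 2.
  by rewrite /eps divfK // gt_eqF.
have e0' : 0 <= eps by rewrite /eps; apply: divr_ge0; [apply: mulr_ge0; apply: exprn_ge0; exact: ltW | exact: ltW].
have num1 : d ^+ 4 * e ^+ 2 <= d * e.
  have h1 : d ^+ 3 * e <= 1.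
    rewrite -[1]mulr1; apply: ler_pM => //; first by rewrite exprn_ge0 // ltW.
      exact: ltW.
    by apply: exprn_ile1 => //; apply: ltW.
  have -> : d ^+ 4 * e ^+ 2 = (d * e) * (d ^+ 3 * e) by ring.
  by rewrite ler_piMr // mulr_ge0 // ltW.
have hk : 2 * (k1 * k2 * ky) <= 2 * k1 ^+ 2 * k2 ^+ 2 * ky.
  have a1 : k1 <= k1 ^+ 2 by rewrite expr2 ler_peMl //; lra.
  have a2 : k2 <= k2 ^+ 2 by rewrite expr2 ler_peMl //; lra.
  have -> : 2 * k1 ^+ 2 * k2 ^+ 2 * ky = 2 * (k1 ^+ 2 * (k2 ^+ 2 * ky)) by ring.
  have -> : 2 * (k1 * k2 * ky) = 2 * (k1 * (k2 * ky)) by ring.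
  rewrite ler_pM2l //.
  have b1 : k1 * (k2 * ky) <= k1 ^+ 2 * (k2 * ky).
    by rewrite ler_wpM2r // mulr_ge0 //; lra.
  have b2 : k2 * ky <= k2 ^+ 2 * ky by rewrite ler_wpM2r //; lra.
  apply: le_trans b1 _; rewrite ler_wpM2l // exprn_ge0 //; lra.
have h2 : 2 * eps * (k1 * k2 * ky) <= d * e.
  apply: le_trans num1; rewrite -hE.
  have -> : 2 * eps * (k1 * k2 * ky) = eps * (2 * (k1 * k2 * ky)) by ring.
  by rewrite ler_wpM2l.
split => //; split; last by lra.
have k12 : 1 <= k1 * k2.
  by rewrite -[X in X <= _]mul1r; apply: ler_pM; lra.
have k0 : 1 <= k1 * k2 * ky.
  by rewrite -[X in X <= _]mul1r; apply: ler_pM; lra.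
have : eps <= eps * (k1 * k2 * ky) by rewrite ler_peMr.
have : d * e <= 1 by rewrite -[X in _ <= X]mul1r; apply: ler_pM; lra.
lra.
Qed.

Lemma num_final (R : realType) (eps D N : R) :
  0 <= eps -> eps <= 2^-1 -> 0 <= N -> 4 * eps * N <= D ->
  N * (2 * (eps ^+ 2) ^+ 2) - eps ^+ 2 * (D - eps * N) <= - (N * eps ^+ 4 / 2).
Proof.
move=> e0 e1 N0 hD.
have h1 : eps ^+ 2 * (4 * eps * N) <= eps ^+ 2 * D by rewrite ler_wpM2l // exprn_ge0.
have h3 : 0 <= N * eps ^+ 3 by rewrite mulr_ge0 // exprn_ge0.
have h4 : N * eps ^+ 4 <= N * eps ^+ 3 * 2^-1.
  have -> : N * eps ^+ 4 = N * eps ^+ 3 * eps by ring.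
  by rewrite ler_wpM2l.
have -> : N * (2 * (eps ^+ 2) ^+ 2) - eps ^+ 2 * (D - eps * N) =
   2 * (N * eps ^+ 4) + N * eps ^+ 3 - eps ^+ 2 * D by ring.
have e4 : eps ^+ 2 * (4 * eps * N) = 4 * (N * eps ^+ 3) by ring.
rewrite e4 in h1.
have -> : - (N * eps ^+ 4 / 2) = - (N * eps ^+ 4) / 2 by ring.
lra.
Qed.
Arguments num_eps {R d e k1 k2 ky}.
Arguments num_final {R eps D N}.
Arguments chernoff {R Y n Wi g lam t T}.
Arguments avg_ex {R T F}.
Arguments sum_pred1 {R T}.
Arguments card_set_sum {R T}.

Lemma ind_sub_le1 (R : realType) (b : bool) (w : R) :
  0 <= w -> w <= 1 -> `|b%:R - w| <= 1.
Proof. by move=> w0 w1; case: b => /=; rewrite ler_norml; lra. Qed.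

Lemma sgn_ge (R : realType) (D x : R) :
  let s := if 0 <= D then 1 else -1 in s * D = `|D| /\ - `|x| <= s * x /\ `|s| = 1.
Proof.
move=> s; rewrite /s; case: ifP => hD.
  rewrite !mul1r ger0_norm // normr1; split => //; split => //.
  by have := lexx `|x|; rewrite ler_norml => /andP[].
have hD' : D < 0 by rewrite ltNge hD.
rewrite !mulN1r ltr0_norm // normrN normr1; split => //; split => //.
by rewrite lerN2 ler_norm.
Qed.

Lemma lam_ok (R : realType) (e : R) : 0 <= e -> e <= 2^-1 -> 0 <= e ^+ 2 <= 2^-1.
Proof.
move=> e0 e1; have e11 : e <= 1 by lra.
rewrite exprn_ge0 //=; apply: le_trans e1.
by rewrite expr2 ler_piMr.
Qed.
Arguments lam_ok {R e}.
Arguments sgn_ge {R}.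

Theorem lemma6 (R : realType) (X1 X2 Y : finType) (W : X1 -> X2 -> Y -> R)
  (delta eta : R) (n : nat)
  (x1 xt1 : {ffun 'I_n -> X1}) (x2 xt2 : {ffun 'I_n -> X2}) :
  is_channel W ->
  0 < delta -> 0 < eta ->
  delta * n%:R <= (hamming x1 xt1)%:R ->
  delta * n%:R <= (hamming x2 xt2)%:R ->
  (forall (a : X1) (b : X2) (P : X1 * X2 -> R),
      is_distr2 P -> P (a, b) = 0 -> eta <= stat_dist (W a b) (mixture W P)) ->
  let eps := delta ^+ 4 * eta ^+ 2 /
             (2 * (#|X1|%:R) ^+ 2 * (#|X2|%:R) ^+ 2 * #|Y|%:R) in
  prod_prob W xt1 xt2 (typical_set W eps x1 x2) <=
    2 * expR (- (n%:R * eps ^+ 4 / 2)).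
Proof.
move=> hW d0 e0 hd1 _ hyp; cbv zeta; set eps := (X in typical_set W X).
have W0 a b y : 0 <= W a b y by case: (hW a b) => h _; exact: h.
have W1 a b : \sum_y W a b y = 1 by case: (hW a b).
have Wle1 a b y : W a b y <= 1.
  by rewrite -(W1 a b) (bigD1 y) //= lerDl; apply: sumr_ge0.
have [n0|npos] := eqVneq n 0%N.
  have hn : (n%:R : R) = 0 by rewrite n0.
  have := @chernoff R Y n (fun i => W (xt1 i) (xt2 i)) (fun _ _ => 0) 0 0
     (typical_set W eps x1 x2) (fun i => W0 _ _) (fun i => W1 _ _).
  rewrite /prod_prob; move=> h; apply: le_trans (h _ _ _ _) _.
  - by move=> i; rewrite big1 // => y _; rewrite mulr0.
  - by move=> i y; rewrite normr0.
  - by rewrite lexx /= invr_ge0 ler0n.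
  - by move=> y _; rewrite big1.
  by rewrite hn !(mul0r, mulr0, subr0, oppr0, expR0, expr0n) /= mulr1 ler1n.
have nR0 : 0 < (n%:R : R) by rewrite ltr0n lt0n.
pose M (u : X1 * X2) := \sum_i ((x1 i, x2 i) == u)%:R * ((xt1 i, xt2 i) != u)%:R : R.
have hM : (hamming x1 xt1)%:R <= \sum_u M u.
  rewrite /hamming card_set_sum /M exchange_big /=.
  apply: ler_sum => i _.
  rewrite (sum_pred1 (x1 i, x2 i) (fun u => ((xt1 i, xt2 i) != u)%:R)).
  by rewrite ler_nat xpair_eqE negb_and [xt1 i == _]eq_sym; case: (x1 i == xt1 i).
have sM0 : 0 < \sum_u M u.
  by apply: lt_le_trans hM; apply: lt_le_trans hd1; rewrite mulr_gt0.
have [[a b] hab] := avg_ex sM0.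
rewrite card_prod natrM in hab.
have K10 : 1 <= (#|X1|%:R : R) by rewrite ler1n; apply/card_gt0P; exists a.
have K20 : 1 <= (#|X2|%:R : R) by rewrite ler1n; apply/card_gt0P; exists b.
have M0 : 0 < M (a, b).
  case: (ltrP 0 (M (a, b))) => // hle.
  have : #|X1|%:R * #|X2|%:R * M (a, b) <= 0.
    by rewrite mulr_ge0_le0 // mulr_ge0 // ler0n.
  by move=> h; have := lt_le_trans sM0 (le_trans hab h); rewrite ltxx.
pose K (v : X1 * X2) := \sum_i ((x1 i, x2 i) == (a, b))%:R * ((xt1 i, xt2 i) == v)%:R : R.
pose P' (v : X1 * X2) := (v != (a, b))%:R * K v / M (a, b).
have sumK (F : X1 * X2 -> R) : \sum_v (v != (a, b))%:R * K v * F v =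
   \sum_i ((x1 i, x2 i) == (a, b))%:R * ((xt1 i, xt2 i) != (a, b))%:R * F (xt1 i, xt2 i).
  rewrite /K; under eq_bigr => v _ do rewrite mulr_sumr mulr_suml.
  rewrite exchange_big /=; apply: eq_bigr => i _.
  rewrite (eq_bigr (fun v => ((x1 i, x2 i) == (a, b))%:R *
     (((xt1 i, xt2 i) == v)%:R * ((v != (a, b))%:R * F v)))); last by move=> v _; ring.
  by rewrite -mulr_sumr (sum_pred1 (xt1 i, xt2 i) (fun v => (v != (a, b))%:R * F v)) mulrA.
have sumK1 : \sum_v (v != (a, b))%:R * K v = M (a, b).
  have := sumK (fun _ => 1); rewrite /M.
  by under eq_bigr => v _ do rewrite mulr1; move=> ->; under eq_bigr => i _ do rewrite mulr1.
have M0' : M (a, b) != 0 by rewrite gt_eqF.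
have P'0 v : 0 <= P' v.
  by rewrite /P' divr_ge0 ?(ltW M0) // mulr_ge0 ?ler0n // sumr_ge0 // => i _; rewrite mulr_ge0 ?ler0n.
have P'd : is_distr2 P'.
  split => //; rewrite /P' -mulr_suml sumK1 divff //.
have P'ab : P' (a, b) = 0 by rewrite /P' eqxx mul0r mul0r.
have heta := hyp a b P' P'd P'ab.
pose D (c : Y) := \sum_i ((x1 i, x2 i) == (a, b))%:R * (W a b c - W (xt1 i) (xt2 i) c).
have hD c : D c = M (a, b) * (W a b c - mixture W P' c).
  rewrite /mixture /P'.
  under eq_bigr => v _ do rewrite mulrAC.
  rewrite -mulr_suml (sumK (fun v => W v.1 v.2 c)) /= mulrBr [M (a, b) * (_ / _)]mulrC divfK //.
  rewrite /M mulr_suml -sumrB; apply: eq_bigr => i _.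
  case: ((xt1 i, xt2 i) =P (a, b)) => [[-> ->]|_] /=; first by rewrite subrr; ring.
  ring.
have mix0 c : 0 <= mixture W P' c.
  by rewrite /mixture sumr_ge0 // => v _; rewrite mulr_ge0.
have mix1 : \sum_c mixture W P' c = 1.
  rewrite /mixture exchange_big /=.
  under eq_bigr => v _ do rewrite -mulr_sumr W1 mulr1.
  by case: P'd.
have sD : \sum_c `|D c| = M (a, b) * \sum_c `|W a b c - mixture W P' c|.
  rewrite mulr_sumr; apply: eq_bigr => c _; by rewrite hD normrM ger0_norm // ltW.
have hS2 : \sum_c `|W a b c - mixture W P' c| <= 2.
  apply: (@le_trans _ _ (\sum_c (W a b c + mixture W P' c))).
    apply: ler_sum => c _; apply: (le_trans (ler_normB _ _)).
    by rewrite !ger0_norm.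
  by rewrite big_split /= W1 mix1.
have eta1 : eta <= 1.
  apply: (le_trans heta); rewrite /stat_dist.
  have : 2^-1 * \sum_c `|W a b c - mixture W P' c| <= 2^-1 * 2.
    by rewrite ler_wpM2l // invr_ge0 ler0n.
  by rewrite mulVf ?pnatr_eq0.
have sD2 : 2 * M (a, b) * eta <= \sum_c `|D c|.
  have -> : 2 * M (a, b) * eta = M (a, b) * (2 * eta) by ring.
  rewrite sD ler_wpM2l //; first exact: ltW.
  move: heta; rewrite /stat_dist => h.
  have : 2 * eta <= 2 * (2^-1 * \sum_c `|W a b c - mixture W P' c|).
    by rewrite ler_wpM2l.
  by rewrite mulrA mulfV ?pnatr_eq0 ?mul1r.
have sDpos : 0 < \sum_c `|D c|.
  by apply: lt_le_trans sD2; rewrite !mulr_gt0.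
have [c hc] := avg_ex sDpos.
have KY0 : 1 <= (#|Y|%:R : R) by rewrite ler1n; apply/card_gt0P; exists c.
have d1 : delta <= 1.
  have : delta * n%:R <= 1 * n%:R.
    apply: (le_trans hd1); rewrite mul1r ler_nat /hamming.
    by apply: leq_trans (max_card _) _; rewrite card_ord.
  by rewrite ler_pM2r.
have [eps0 [eps12 heps]] := num_eps d0 d1 e0 eta1 K10 K20 KY0.
have h4 : 4 * eps * n%:R <= `|D c|.
  set k1 := (#|X1|%:R : R) in K10 hab heps *.
  set k2 := (#|X2|%:R : R) in K20 hab heps *.
  set ky := (#|Y|%:R : R) in KY0 hc heps *.
  have k10 : 0 <= k1 by apply: le_trans K10.
  have k20 : 0 <= k2 by apply: le_trans K20.
  have ky0 : 0 <= ky by apply: le_trans KY0.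
  have kpos : 0 < k1 * k2 * ky.
    by rewrite !mulr_gt0 //; apply: lt_le_trans K10 || apply: lt_le_trans K20 || apply: lt_le_trans KY0.
  rewrite -(ler_pM2r kpos).
  have -> : 4 * eps * n%:R * (k1 * k2 * ky) = (4 * eps * (k1 * k2 * ky)) * n%:R by ring.
  apply: (@le_trans _ _ (2 * (delta * eta) * n%:R)); first by rewrite ler_wpM2r // ler0n.
  have hdn : delta * n%:R <= k1 * k2 * M (a, b).
    by apply: le_trans hd1 _; apply: le_trans hM hab.
  have -> : 2 * (delta * eta) * n%:R = (2 * eta) * (delta * n%:R) by ring.
  apply: (@le_trans _ _ ((2 * eta) * (k1 * k2 * M (a, b)))).
    by rewrite ler_wpM2l // mulr_ge0 // ltW.
  have -> : 2 * eta * (k1 * k2 * M (a, b)) = (k1 * k2) * (2 * M (a, b) * eta) by ring.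
  have -> : `|D c| * (k1 * k2 * ky) = (k1 * k2) * (ky * `|D c|) by ring.
  rewrite ler_wpM2l ?mulr_ge0 //.
  by apply: le_trans sD2 hc.
pose s : R := if 0 <= D c then 1 else -1.
have hsg x : s * D c = `|D c| /\ - `|x| <= s * x /\ `|s| = 1 := sgn_ge (D c) x.
have [hsD [_ hs1]] := hsg 0.
pose g (i : 'I_n) (y : Y) :=
  s * (((x1 i, x2 i) == (a, b))%:R * ((y == c)%:R - W (xt1 i) (xt2 i) c)).
apply: le_trans (@chernoff R Y n (fun i => W (xt1 i) (xt2 i)) g (eps ^+ 2)
   (`|D c| - eps * n%:R) (typical_set W eps x1 x2) _ _ _ _ _ _) _.
- by move=> i y; apply: W0.
- by move=> i; apply: W1.
- move=> i; rewrite /g.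
  rewrite (eq_bigr (fun y => s * ((x1 i, x2 i) == (a, b))%:R * ((c == y)%:R * W (xt1 i) (xt2 i) y)
     - s * ((x1 i, x2 i) == (a, b))%:R * W (xt1 i) (xt2 i) c * W (xt1 i) (xt2 i) y)); last first.
    by move=> y _; rewrite [c == y]eq_sym; ring.
  by rewrite sumrB -!mulr_sumr sum_pred1 W1 mulr1 subrr.
- move=> i y; rewrite /g normrM hs1 mul1r normrM.
  case: (_ == (a, b)) => /=; first by rewrite normr1 mul1r ind_sub_le1.
  by rewrite normr0 mul0r ler01.
- exact: lam_ok.
- move=> y; rewrite inE => /forallP /(_ a) /forallP /(_ b) /forallP /(_ c) hty.
  have -> : \sum_i g i (y i) = s * ((count3 x1 x2 y a b c)%:R - (count2 x1 x2 a b)%:R * W a b c + D c).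
    rewrite /g -mulr_sumr; congr (s * _).
    rewrite /count3 /count2 !card_set_sum /D mulr_suml -sumrB -big_split /=.
    apply: eq_bigr => i _; rewrite xpair_eqE.
    by case: (x1 i == a); case: (x2 i == b); case: (y i == c) => /=; ring.
  rewrite mulrDr hsD [X in _ <= X]addrC lerD2l.
  have [_ [hx _]] := hsg ((count3 x1 x2 y a b c)%:R - (count2 x1 x2 a b)%:R * W a b c).
  by apply: le_trans hx; rewrite lerN2.
apply: (@le_trans _ _ (expR (- (n%:R * eps ^+ 4 / 2)))).
  by rewrite ler_expR; apply: num_final => //; rewrite ler0n.
by rewrite -[X in X <= _]mul1r ler_wpM2r ?expR_ge0 // ler1n.
Qed.
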